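(* Let $\mathcal{C}$ be an ordinary smooth absolutely irreducible projective curve of genus $g\ge1$ over $\mathbb{F}_q$ with absolutely simple Jacobian, and suppose that the Galois group of the splitting field of $P(T)$ over $\mathbb{Q}$ is the Weyl group $\mathcal{W}_g$ of $\mathrm{Sp}(2g)$, acting on the roots so that for each $i\in\{1,\ldots,g\}$ it contains an automorphism exchanging $\tau_i$ and $\overline{\tau_i}$ while fixing $\tau_j$ and $\overline{\tau_j}$ for all $j\neq i$. Then the Frobenius angles $\vartheta_1,\ldots,\vartheta_g$ are linearly independent modulo $1$; equivalently, there is no nonzero $(k_0,\ldots,k_g)\in\mathbb{Z}^{g+1}$ with $\prod_{i=1}^g\tau_i^{k_i}=q^{k_0}$.
   Context: Let $\mathcal{C}$ be a smooth projective curve of genus $g\ge1$ over the finite field $\mathbb{F}_q$ ($q$ a power of the prime $p$). The numerator of its zeta function is $P(T)=\prod_{j=1}^{2g}(1-\tau_j T)\in\mathbb{Z}[T]$, where the Frobenius eigenvalues $\tau_j$ satisfy $|\tau_j|=q^{1/2}$ and $\tau_{j+g}=\overline{\tau_j}$ for $j=1,\ldots,g$. Write $\tau_j = q^{1/2}e^{\pi i \vartheta_j}$ and $\tau_{j+g}=q^{1/2}e^{-\pi i\vartheta_j}$ with $\vartheta_j\in[0,1]$; these $\vartheta_j$ ($j=1,\ldots,g$) are the Frobenius angles. Fixing an embedding $\overline{\mathbb{Q}}\hookrightarrow\overline{\mathbb{Q}}_p$, the curve is ordinary if at least half of $\tau_1,\ldots,\tau_{2g}$ are $p$-adic units. Real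 numbers $\psi_1,\ldots,\psi_s$ are linearly independent modulo $1$ if $1,\psi_1,\ldots,\psi_s$ are linearly independent over $\mathbb{Z}$. The Weyl group $\mathcal{W}_g$ of $\mathrm{Sp}(2g)$ is the group of signed permutations of the $g$ pairs $\{\tau_i,\overline{\tau_i}\}$ (permuting the pairs and independently swapping elements within pairs). *)

(* Defs.v *)
From HB Require Import structures.
From mathcomp Require Import all_boot all_order all_algebra all_fingroup all_field.
Set Implicit Arguments. Unset Strict Implicit. Unset Printing Implicit Defensive.
Import Order.TTheory GRing.Theory Num.Theory.
Local Open Scope ring_scope.

(* A prime ideal [pr] of the ring [Aint] of algebraic integers (in algC) lying
   above the rational prime p.  Fixing an embedding Qbar -> Qbar_p is the same
   as fixing such a prime (the pullback of the maximal ideal of Zbar_p). *)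
Definition padic_prime_above (p : nat) (pr : algC -> Prop) : Prop :=
  [/\ (forall x, pr x -> x \in Aint),
      (forall x y, pr x -> pr y -> pr (x - y)),
      (forall a x, a \in Aint -> pr x -> pr (a * x)),
      (forall a b, a \in Aint -> b \in Aint -> pr (a * b) -> (pr a \/ pr b)) &
      ~ pr 1 /\ pr p%:R].

(* x is a p-adic unit (valuation 0 at the prime pr): x lies in the
   multiplicative group of the localisation of Aint at pr. *)
Definition padic_unit (pr : algC -> Prop) (x : algC) : Prop :=
  exists a b, [/\ a \in Aint, b \in Aint, ~ pr a, ~ pr b & x = a / b].

(* The 2g Frobenius eigenvalues: (j, false) |-> tau_j, (j, true) |-> conj tau_j
   (i.e. tau_{j+g}). *)
Definition eig (g : nat) (tau : 'I_g -> algC) (x : 'I_g * bool) : algC :=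
  if x.2 then (tau x.1)^* else tau x.1.

Definition zetaP (g : nat) (tau : 'I_g -> algC) : {poly algC} :=
  \prod_(j < g) ((1 - tau j *: 'X) * (1 - (tau j)^* *: 'X)).

Definition ordinary (g : nat) (pr : algC -> Prop) (tau : 'I_g -> algC) : Prop :=
  exists S : {set ('I_g * bool)%type}, (g <= #|S|)%N /\ forall x, x \in S -> padic_unit pr (eig tau x).

(* Signed permutation (pi, eps) in W_g applied to the eigenvalue labels:
   tau_i |-> tau_{pi i} or its conjugate according to eps i. *)
Definition signed_img (g : nat) (tau : 'I_g -> algC) (pi : {perm 'I_g}) (eps : 'I_g -> bool)
  (x : 'I_g * bool) : algC :=
  eig tau (pi x.1, x.2 (+) eps x.1).

Definition acts_as (g : nat) (tau : 'I_g -> algC) (sigma : {rmorphism algC -> algC})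
  (pi : {perm 'I_g}) (eps : 'I_g -> bool) : Prop :=
  forall x, sigma (eig tau x) = signed_img tau pi eps x.

(* The Galois group of the splitting field of P over Q (= restrictions of
   automorphisms of algC to the roots) is exactly W_g acting by signed
   permutations of the pairs {tau_i, conj tau_i}. *)
Definition galois_is_weyl (g : nat) (tau : 'I_g -> algC) : Prop :=
  (forall sigma : {rmorphism algC -> algC}, exists pi eps, acts_as tau sigma pi eps) /\
  (forall pi eps, exists sigma : {rmorphism algC -> algC}, acts_as tau sigma pi eps).

(* Main.v *)
Require Import Defs.
From HB Require Import structures.
From mathcomp Require Import all_boot all_order all_algebra all_fingroup all_field.
From Stdlib Require Import Classical.
Import Order.TTheory GRing.Theory Num.Theory.
Local Open Scope ring_scope.

Lemma pu1 {p : nat} {pr} : padic_prime_above p pr -> padic_unit pr 1.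
Proof.
case=> _ _ _ _ [n1 _]; exists 1, 1; split.
- exact: Aint1.
- exact: Aint1.
- exact: n1.
- exact: n1.
- by rewrite divr1.
Qed.

Lemma pu_mul {p : nat} {pr x y} : padic_prime_above p pr ->
  padic_unit pr x -> padic_unit pr y -> padic_unit pr (x * y).
Proof.
case=> _ _ _ Hp _ [a [b [Ha Hb na nb ->]]] [c [d [Hc Hd nc nd ->]]].
exists (a * c), (b * d); split; rewrite ?rpredM //.
- by case/(Hp _ _ Ha Hc).
- by case/(Hp _ _ Hb Hd).
- by rewrite mulf_div.
Qed.

Lemma pu_inv {pr x} : padic_unit pr x -> padic_unit pr x^-1.
Proof.
case=> [a [b [Ha Hb na nb ->]]]; exists b, a; split => //.
by rewrite invf_div.
Qed.

Lemma pu_exp {p : nat} {pr x n} : padic_prime_above p pr ->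
  padic_unit pr x -> padic_unit pr (x ^+ n).
Proof.
move=> H u; elim: n => [|n IH]; first by rewrite expr0; exact: pu1 H.
by rewrite exprS; apply: pu_mul H u IH.
Qed.

Lemma pu_expz {p : nat} {pr x} {k : int} : padic_prime_above p pr ->
  padic_unit pr x -> padic_unit pr (x ^ k).
Proof.
move=> H u; case: k => n /=; first exact: pu_exp H u.
by apply: pu_inv; apply: pu_exp H u.
Qed.

Lemma npu_q {p q : nat} {pr} {m} : prime p -> (exists n, (0 < n)%N /\ q = (p ^ n)%N) ->
  padic_prime_above p pr -> (0 < m)%N -> ~ padic_unit pr ((q%:R : algC) ^+ m).
Proof.
move=> pp [n [n0 ->]] H m0.
have := H; case=> _ _ Hcl _ [_ Hp].
rewrite -natrX -expnM.
have : (0 < n * m)%N by rewrite muln_gt0 n0.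
case: (n * m)%N => // e _.
case=> [a [b [Ha Hb na nb Heq]]].
have nz : ((p ^ e.+1)%N%:R : algC) != 0.
  by rewrite pnatr_eq0 -lt0n expn_gt0 prime_gt0.
have b0 : b != 0.
  apply/eqP => b0; move: Heq; rewrite b0 invr0 mulr0 => E.
  by move: nz; rewrite E eqxx.
apply: na.
have -> : a = (p ^ e.+1)%N%:R * b by rewrite Heq divfK.
rewrite expnS natrM -mulrA mulrC.
apply: Hcl => //.
by rewrite rpredM // rpred_nat.
Qed.

Lemma npu_qz {p q : nat} {pr} {k : int} : prime p -> (exists n, (0 < n)%N /\ q = (p ^ n)%N) ->
  padic_prime_above p pr -> k != 0 -> ~ padic_unit pr ((q%:R : algC) ^ k).
Proof.
move=> pp hq H; case: k => m /= nz.
  have m0 : (0 < m)%N by rewrite lt0n; move: nz; apply: contra => /eqP ->.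
  exact: (npu_q pp hq H m0).
move=> /pu_inv; rewrite invrK.
exact: (npu_q pp hq H (ltn0Sn m)).
Qed.

Theorem mainTheorem6 (p q g : nat) (tau : 'I_g -> algC) (pr : algC -> Prop) :
  prime p -> (exists n, (0 < n)%N /\ q = (p ^ n)%N) -> (1 <= g)%N ->
  zetaP tau \is a polyOver Num.int ->
  (forall j, `|tau j| ^+ 2 = q%:R) ->
  (forall j, 0 <= 'Im (tau j)) ->
  padic_prime_above p pr ->
  ordinary pr tau ->
  galois_is_weyl tau ->
  (forall i, exists sigma : {rmorphism algC -> algC},
      sigma (tau i) = (tau i)^* /\ sigma ((tau i)^*) = tau i /\
      (forall j, j != i -> sigma (tau j) = tau j /\ sigma ((tau j)^*) = (tau j)^*)) ->
  forall (k0 : int) (k : 'I_g -> int),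
    \prod_(i < g) tau i ^ k i = (q%:R : algC) ^ k0 ->
    k0 = 0 /\ (forall i, k i = 0).
Proof.
move=> pp hq g1 _ Hnorm _ H Hord _ Hsig k0 k Hprod.
have q0 : (q%:R : algC) != 0.
  case: hq => n [_ ->]; by rewrite pnatr_eq0 -lt0n expn_gt0 prime_gt0.
have tau0 j : tau j != 0.
  apply/eqP => E; move: (Hnorm j); rewrite E normr0 expr0n /= => E2.
  by move: q0; rewrite -E2 eqxx.
have Hqq j : tau j * (tau j)^* = q%:R by rewrite -normCK.
have Hswap i : tau i ^ k i = (tau i)^* ^ k i.
  have [sigma [s1 [s2 s3]]] := Hsig i.
  have := congr1 sigma Hprod.
  rewrite rmorph_prod fmorphXz rmorph_nat -Hprod.
  rewrite (bigD1 i) //= [in RHS](bigD1 i) //= fmorphXz s1.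
  rewrite (eq_bigr (fun j => tau j ^ k j)); last first.
    by move=> j ji; rewrite fmorphXz (proj1 (s3 j ji)).
  move/mulIf => -> //.
  by rewrite prodf_seq_neq0; apply/allP => j _; apply/implyP => _; apply: expfz_neq0.
have Hunit i : padic_unit pr (tau i) \/ padic_unit pr (tau i)^*.
  apply: NNPP => Hn.
  have [S [HS HSu]] := Hord.
  have inj : {in S &, injective (@fst 'I_g bool)}.
    move=> [j b] [j' b'] xS yS /= E; subst j'.
    move: xS yS; case: b; case: b' => xS yS; try by []; exfalso.
    - apply: (npu_qz (k := 1) pp hq H) => //.
      rewrite expr1z -(Hqq j) mulrC.
      by apply: (pu_mul H (HSu _ xS) (HSu _ yS)).
    - apply: (npu_qz (k := 1) pp hq H) => //.
      rewrite expr1z -(Hqq j).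
      by apply: (pu_mul H (HSu _ xS) (HSu _ yS)).
  have sub : (@fst 'I_g bool) @: S \subset [set~ i].
    apply/subsetP => j /imsetP [[j' b] xS ->] /=.
    rewrite !inE; apply/eqP => E; subst j'.
    apply: Hn; have u := HSu _ xS; rewrite /eig /= in u; clear xS.
    by move: u; case: b => u; [right|left].
  have := subset_leq_card sub.
  rewrite (card_in_imset inj) cardsC1 card_ord => Hle.
  have := leq_trans HS Hle.
  by case: (g) g1 => // g' _ /=; rewrite ltnn.
have Hk i : k i = 0.
  apply/eqP; apply: contraT => nz.
  exfalso; apply: (npu_qz pp hq H nz).
  rewrite -(Hqq i) expfzMl.
  case: (Hunit i) => u.
    by rewrite -Hswap; apply: (pu_mul H); apply: (pu_expz H u).
  by rewrite Hswap; apply: (pu_mul H); apply: (pu_expz H u).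
split => //.
move: Hprod; rewrite big1 => [E|j _]; last by rewrite Hk expr0z.
apply/eqP; apply: contraT => nz; exfalso.
apply: (npu_qz pp hq H nz); rewrite -E; exact: pu1 H.
Qed.
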